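(* Let $\boldsymbol\pi\in\mathcal P^+$ and let $V\in\hat{\mathcal F}$ be a self-extension of $V(\boldsymbol\pi)$. Then $V$ is non-trivial if and only if $V_{\mathrm{wt}\boldsymbol\pi}$ contains a unique (up to scalars) highest-$\ell$-weight vector. Moreover, if $V$ is non-trivial and $v\in V_{\mathrm{wt}\boldsymbol\pi}$ is not an $\ell$-weight vector, then $V=\hat{\mathbf U}_qv$.
   Context: Setting: $R$ irreducible reduced root system with simple roots indexed by $I$, fundamental weights $\omega_i$, weight lattice $P$, $d_i$ symmetrizing integers, $q\in\mathbb C^\times$ not a root of unity, $q_i=q^{d_i}$, $[m]_i=(q_i^m-q_i^{-m})/(q_i-q_i^{-1})$. $\hat{\mathbf U}_q$ is the quantum loop algebra of $R$ with Drinfeld generators $x^\pm_{i,r}$ ($r\in\mathbb Z$), $h_{i,s}$ ($s\in\mathbb Z\setminus\{0\}$), $k_i^{\pm1}$. A module $V$ is of type 1 if $V=\bigoplus_{\mu\in P}V_\mu$, $V_\mu=\{v:k_iv=q_i^{\mu_i}v\}$ where $\mu=\sum\mu_i\omega_i$; $\hat{\mathcal F}$ is the category of finite-dimensional type 1 modules. An $\ell$-weight vector is a simultaneous eigenvector of all $h_{i,s}$; a highest-$\ell$-weight vector is an $\ell$-weight vector lying in some $V_\mu$ and annihilated by all $x^+_{i,r}$. $\mathcal P^+$ is the monoid of $I$-tuples $\boldsymbol\pi=(\pi_i)$ of polynomials with constant term 1, $\mathrm{wt}\boldsymbol\pi=\sum_i(\deg\pi_i)\omega_i$, and $V(\boldsymbol\pi)$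 is the simple object of $\hat{\mathcal F}$ generated by a highest-$\ell$-weight vector $v(\boldsymbol\pi)\in V(\boldsymbol\pi)_{\mathrm{wt}\boldsymbol\pi}$ with $h_{i,s}$-eigenvalues $h_{i,s}(\boldsymbol\pi)$ given by $\exp(-\sum_{s\ge1}h_{i,\pm s}(\boldsymbol\pi)u^s/[s]_i)=\pi_i^\pm(u)$ ($\pi_i^+=\pi_i$, $\pi_i^-(u)=u^{\deg\pi_i}\pi_i(u^{-1})$ normalized to constant term 1). A self-extension of $V(\boldsymbol\pi)$ is an object $V$ of $\hat{\mathcal F}$ fitting in a short exact sequence $0\to V(\boldsymbol\pi)\to V\to V(\boldsymbol\pi)\to0$; it is trivial if $V\cong V(\boldsymbol\pi)\oplus V(\boldsymbol\pi)$ and non-trivial otherwise. *)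

(* Defs.v *)
From HB Require Import structures.
From mathcomp Require Import all_boot all_order all_algebra all_fingroup.
From mathcomp Require Import complex.
From mathcomp Require Import Rstruct.
Set Implicit Arguments.
Unset Strict Implicit.
Unset Printing Implicit Defensive.
Import Order.TTheory GRing.Theory Num.Theory.
Local Open Scope ring_scope.

Definition C : fieldType := complex Rdefinitions.R.

Definition finite_cartan (n : nat) (A : 'M[int]_n) (d : 'I_n -> nat) : Prop :=
  (0 < n)%N /\
      (forall i, A i i = 2%:Z) /\
      (forall i j, i != j -> A i j <= 0) /\
      (forall i, (0 < d i)%N) /\
      (forall i j, (d i)%:Z * A i j = (d j)%:Z * A j i) /\
      (forall x : 'I_n -> rat, (exists i, x i != 0) ->
         0 < \sum_i \sum_j x i * ((d i)%:Z * A i j)%:~R * x j) /\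
      (forall S : {set 'I_n}, S != set0 -> S != setT ->
         exists i, exists j, [/\ i \in S, j \notin S & A i j != 0]).

Definition not_root_of_unity (q : C) : Prop :=
  q != 0 /\ forall k : nat, (0 < k)%N -> q ^+ k != 1.

Section QLoop.
Variables (n : nat) (A : 'M[int]_n) (d : 'I_n -> nat) (q : C).

Definition qi (i : 'I_n) : C := q ^+ d i.
Definition qint (i : 'I_n) (m : int) : C :=
  (qi i ^ m - qi i ^ (- m)) / (qi i - (qi i)^-1).
Definition qfact (i : 'I_n) (k : nat) : C := \prod_(1 <= j < k.+1) qint i j%:Z.
Definition qbinom (i : 'I_n) (m k : nat) : C :=
  qfact i m / (qfact i k * qfact i (m - k)).

(* Coefficients of exp(F(u)) for a formal power series F(u) = sum_{s>=1} F_s u^s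
   (F_0 ignored), computed by  r Phi_r = sum_{s=1}^r s F_s Phi_{r-s},
   Phi_0 = 1, in an algebra given by a multiplication [mul] and unit [one]. *)
Fixpoint expseq (T : lmodType C) (mul : T -> T -> T) (one : T)
    (F : nat -> T) (r : nat) : seq T :=
  match r with
  | 0 => [:: one]
  | r'.+1 =>
      let l := expseq mul one F r' in
      rcons l ((r'.+1)%:R^-1 *:
                 \sum_(s < r'.+1) ((s.+1)%:R *: mul (F s.+1) (nth 0 l (r' - s))))
  end.
Definition expcoef (T : lmodType C) (mul : T -> T -> T) (one : T)
    (F : nat -> T) (r : nat) : T := nth 0 (expseq mul one F r) r.

(* A representation of the quantum loop algebra on C^m (column vectors):
   images of x^+_{i,r}, x^-_{i,r}, h_{i,s} (only s <> 0 is meaningful) and k_i. *)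
Record qlmod (m : nat) := QLMod {
  xp : 'I_n -> int -> 'M[C]_m;
  xm : 'I_n -> int -> 'M[C]_m;
  hh : 'I_n -> int -> 'M[C]_m;
  kk : 'I_n -> 'M[C]_m }.

Section Rep.
Variables (m : nat) (M : qlmod m).
Local Notation xp := (xp M).
Local Notation xm := (xm M).
Local Notation hh := (hh M).
Local Notation kk := (kk M).
Local Notation kinv i := (invmx (kk i)).

Definition mexp (F : nat -> 'M[C]_m) (r : nat) : 'M[C]_m :=
  @expcoef 'M[C]_m (@mulmx C m m m) 1%:M F r.

(* psi^+_i(u) = k_i exp((q_i - q_i^{-1}) sum_{s>=1} h_{i,s} u^s),
   psi^-_i(u) = k_i^{-1} exp(-(q_i - q_i^{-1}) sum_{s>=1} h_{i,-s} u^{-s}) *)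
Definition psip (i : 'I_n) (z : int) : 'M[C]_m :=
  if z < 0 then 0
  else kk i *m mexp (fun s => (qi i - (qi i)^-1) *: hh i s%:Z) `|z|%N.
Definition psim (i : 'I_n) (z : int) : 'M[C]_m :=
  if 0 < z then 0
  else kinv i *m mexp (fun s => - (qi i - (qi i)^-1) *: hh i (- s%:Z)) `|z|%N.

Definition serre_word (i j : 'I_n) (mm : nat) (x : 'I_n -> int -> 'M[C]_m)
    (r : 'I_mm -> int) (s : int) (sg : 'S_mm) (k : nat) : 'M[C]_m :=
  (\prod_(t < mm | (t < k)%N) x i (r (sg t))) *m x j s *m
  (\prod_(t < mm | (k <= t)%N) x i (r (sg t))).

Definition is_qlrep : Prop :=
      (forall i, kk i \in unitmx) /\
      (forall i j, kk i *m kk j = kk j *m kk i) /\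
      (forall i j r, r != 0 -> kk i *m hh j r = hh j r *m kk i) /\
      (forall i j r s, r != 0 -> s != 0 -> hh i r *m hh j s = hh j s *m hh i r) /\
      (forall i j r, kk i *m xp j r *m kinv i = (qi i ^ A i j) *: xp j r) /\
      (forall i j r, kk i *m xm j r *m kinv i = (qi i ^ (- A i j)) *: xm j r) /\
      (forall i j r s, r != 0 ->
         hh i r *m xp j s - xp j s *m hh i r
         = ((r%:~R)^-1 * qint i (r * A i j)) *: xp j (r + s)) /\
      (forall i j r s, r != 0 ->
         hh i r *m xm j s - xm j s *m hh i r
         = - (((r%:~R)^-1 * qint i (r * A i j)) *: xm j (r + s))) /\
      (forall i j r s,
         xp i (r + 1) *m xp j s - qi i ^ A i j *: (xp j s *m xp i (r + 1))
         = qi i ^ A i j *: (xp i r *m xp j (s + 1)) - xp j (s + 1) *m xp i r) /\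
      (forall i j r s,
         xm i (r + 1) *m xm j s - qi i ^ (- A i j) *: (xm j s *m xm i (r + 1))
         = qi i ^ (- A i j) *: (xm i r *m xm j (s + 1)) - xm j (s + 1) *m xm i r) /\
      (forall i j r s,
         xp i r *m xm j s - xm j s *m xp i r
         = if i == j then (qi i - (qi i)^-1)^-1 *: (psip i (r + s) - psim i (r + s))
           else 0) /\
      (forall i j, i != j ->
         let mm := `|1 - A i j|%N in
         forall (r : 'I_mm -> int) (s : int),
           (\sum_(sg : 'S_mm) \sum_(k < mm.+1)
               ((-1) ^+ k * qbinom i mm k) *: serre_word i j xp r s sg k = 0)
        /\ (\sum_(sg : 'S_mm) \sum_(k < mm.+1)
               ((-1) ^+ k * qbinom i mm k) *: serre_word i j xm r s sg k = 0)).

(* Weights are I-tuples of integers (coordinates in the fundamental weights). *)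
Definition in_wspace (mu : 'I_n -> int) (v : 'cV[C]_m) : Prop :=
  forall i, kk i *m v = (qi i ^ mu i) *: v.

Definition type1 : Prop :=
  exists s : seq ('I_n -> int), forall v : 'cV[C]_m,
    exists w : ('I_n -> int) -> 'cV[C]_m,
      (forall mu, in_wspace mu (w mu)) /\ v = \sum_(mu <- s) w mu.

(* object of the category \hat F (finite dimensionality is built in) *)
Definition in_Fhat : Prop := is_qlrep /\ type1.

Definition lweight_vector (v : 'cV[C]_m) : Prop :=
  v != 0 /\ forall i s, s != 0 -> exists c : C, hh i s *m v = c *: v.

Definition hlw_vector (v : 'cV[C]_m) : Prop :=
  [/\ lweight_vector v, (exists mu, in_wspace mu v) &
      forall i r, xp i r *m v = 0].

Definition stable_subspace (S : 'cV[C]_m -> Prop) : Prop :=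
  [/\ S 0, (forall v w, S v -> S w -> S (v + w)),
      (forall (c : C) v, S v -> S (c *: v)) &
      (forall v, S v -> forall i r,
         [/\ S (xp i r *m v), S (xm i r *m v), (r != 0 -> S (hh i r *m v)),
             S (kk i *m v) & S (kinv i *m v)])].

Definition in_generated (v w : 'cV[C]_m) : Prop :=
  forall S, stable_subspace S -> S v -> S w.

Definition generated_by (v : 'cV[C]_m) : Prop := forall w, in_generated v w.

Definition simple_mod : Prop :=
  (0 < m)%N /\ forall v : 'cV[C]_m, v != 0 -> generated_by v.

End Rep.

Definition qlhom (m1 m2 : nat) (M1 : qlmod m1) (M2 : qlmod m2)
    (f : 'M[C]_(m2, m1)) : Prop :=
  forall i r,
    [/\ xp M2 i r *m f = f *m xp M1 i r, xm M2 i r *m f = f *m xm M1 i r,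
        (r != 0 -> hh M2 i r *m f = f *m hh M1 i r) &
        kk M2 i *m f = f *m kk M1 i].

Definition lin_injective (m1 m2 : nat) (f : 'M[C]_(m2, m1)) : Prop :=
  forall x : 'cV[C]_m1, f *m x = 0 -> x = 0.
Definition lin_surjective (m1 m2 : nat) (f : 'M[C]_(m2, m1)) : Prop :=
  forall y : 'cV[C]_m2, exists x : 'cV[C]_m1, y = f *m x.

Definition qliso (m1 m2 : nat) (M1 : qlmod m1) (M2 : qlmod m2)
    (f : 'M[C]_(m2, m1)) : Prop :=
  [/\ qlhom M1 M2 f, lin_injective f & lin_surjective f].

Definition dsum2 (p : nat) (M : qlmod p) : qlmod (p + p) :=
  QLMod (fun i r => block_mx (xp M i r) 0 0 (xp M i r))
        (fun i r => block_mx (xm M i r) 0 0 (xm M i r))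
        (fun i r => block_mx (hh M i r) 0 0 (hh M i r))
        (fun i => block_mx (kk M i) 0 0 (kk M i)).

Definition scexp (F : nat -> C) (r : nat) : C :=
  @expcoef C^o *%R 1 F r.

Definition drinfeld_poly (pi : 'I_n -> {poly C}) : Prop :=
  forall i, (pi i)`_0 = 1.

(* wt pi = sum_i (deg pi_i) omega_i *)
Definition wt (pi : 'I_n -> {poly C}) : 'I_n -> int :=
  fun i => ((size (pi i)).-1)%:Z.

(* pi^-(u) = u^{deg pi} pi(u^{-1}), normalized to have constant term 1 *)
Definition pi_minus (p : {poly C}) : {poly C} :=
  (lead_coef p)^-1 *: Poly (rev p).

(* hv i s = h_{i,s}(pi):  exp(- sum_{s>=1} h_{i,+-s}(pi) u^s / [s]_i) = pi_i^+-(u) *)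
Definition h_of_pi (pi : 'I_n -> {poly C}) (hv : 'I_n -> int -> C) : Prop :=
  forall i r,
    scexp (fun s => - hv i s%:Z / qint i s%:Z) r = (pi i)`_r /\
    scexp (fun s => - hv i (- s%:Z) / qint i s%:Z) r = (pi_minus (pi i))`_r.

Definition is_Vpi (pi : 'I_n -> {poly C}) (p : nat) (M : qlmod p) : Prop :=
  [/\ in_Fhat M, simple_mod M &
      exists (v : 'cV[C]_p) (hv : 'I_n -> int -> C),
        [/\ h_of_pi pi hv, in_wspace M (wt pi) v, hlw_vector M v &
            forall i s, s != 0 -> hh M i s *m v = hv i s *: v]].

Definition self_extension (p m : nat) (M : qlmod p) (V : qlmod m)
    (f : 'M[C]_(m, p)) (g : 'M[C]_(p, m)) : Prop :=
  in_Fhat V /\ qlhom M V f /\ qlhom V M g /\ lin_injective f /\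
      lin_surjective g /\ g *m f = 0 /\
      (forall v : 'cV[C]_m, g *m v = 0 -> exists x, v = f *m x).

Definition trivial_ext (p m : nat) (M : qlmod p) (V : qlmod m) : Prop :=
  exists f : 'M[C]_(m, p + p), qliso (dsum2 M) V f.

End QLoop.

(* Main.v *)
Require Import Defs.
From mathcomp Require Import all_boot all_order all_algebra all_fingroup.
From mathcomp Require Import ssrnum.
Import Num.Theory.
From Stdlib Require Import ClassicalEpsilon.
Set Implicit Arguments.
Unset Strict Implicit.
Unset Printing Implicit Defensive.
Import GRing.Theory.
Local Open Scope ring_scope.
Section Main.
Variables (n : nat) (A : 'M[int]_n) (d : 'I_n -> nat) (q : C).
Hypothesis HA : finite_cartan A d.
Hypothesis Hq : not_root_of_unity q.

Local Notation qi := (qi d q).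

Lemma qi_neq0 i : qi i != 0.
Proof. by rewrite /Defs.qi expf_neq0 //; case: Hq. Qed.

Lemma wsep m (X : qlmod n m) (mu : 'I_n -> int) :
  (forall i j, kk X i *m kk X j = kk X j *m kk X i) ->
  forall (ys : seq ('cV[C]_m * ('I_n -> int))) z,
   (forall y, List.In y ys -> in_wspace d q X y.2 y.1 /\
        exists i, qi i ^ y.2 i != qi i ^ mu i) ->
   in_wspace d q X mu z -> z = \sum_(y <- ys) y.1 -> z = 0.
Proof.
move=> Hcomm ys; move Hk: (size ys) => k; elim: k ys Hk => [|k IH] [|[y mu'] ys] //= Hk z Hys Hz Hzs; rewrite Hzs in Hz *; try by rewrite big_nil.
case: Hk => Hk.
rewrite big_cons /= in Hz *.
have [Hy [i Hi]] := Hys _ (or_introl erefl); rewrite /= in Hy Hi.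
set c := qi i ^ mu' i.
set P := kk X i - c%:M.
have PY : forall (v : 'cV_m) nu, in_wspace d q X nu v -> in_wspace d q X nu (P *m v).
  move=> v nu Hv j; rewrite /P mulmxA mulmxBr Hcomm [kk X j *m _]scalar_mxC.
  by rewrite -mulmxBl -mulmxA Hv -scalemxAr.
have Py0 : P *m y = 0 by rewrite /P mulmxBl Hy mul_scalar_mx subrr.
have HPz : P *m (y + \sum_(y <- ys) y.1) = 0.
  apply: (IH [seq (P *m t.1, t.2) | t <- ys]); first by rewrite size_map.
  - move=> t /List.in_map_iff [t0 [<- Ht0]] /=.
    have [H1 H2] := Hys t0 (or_intror Ht0); split=> //; exact: PY.
  - exact: PY _ _ Hz.
  - by rewrite big_map mulmxDr Py0 add0r mulmx_sumr.
have H0 : (qi i ^ mu i - c) *: (y + \sum_(y <- ys) y.1) = 0.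
  by move: HPz; rewrite /P mulmxBl mul_scalar_mx Hz -scalerBl.
move/eqP: H0; rewrite scaler_eq0 subr_eq0 eq_sym (negbTE Hi) /=.
by move/eqP.
Qed.


Lemma qpow_eq1 i (z : int) : qi i ^ z = 1 -> z = 0.
Proof.
have Hd : (0 < d i)%N by case: HA => _ [_ [_ [H _]]]; exact: H.
have key : forall k : nat, (0 < k)%N -> qi i ^+ k != 1.
  move=> k Hk; rewrite /Defs.qi -exprM; case: Hq => _; apply; by rewrite muln_gt0 Hd.
case: z => k H.
  case: k H => // k H; exfalso.
  by move: (key k.+1 isT); rewrite -[qi i ^+ _]/(qi i ^ (Posz k.+1)) H eqxx.
exfalso; move: H => /(congr1 (fun x => x^-1)).
rewrite -[_ ^ Negz k]/((qi i ^+ k.+1)^-1) invrK invr1 => H.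
by move: (key k.+1 isT); rewrite H eqxx.
Qed.

Definition act m (X : qlmod n m) (W : seq ('I_n * int)) (z : 'cV[C]_m) : 'cV[C]_m :=
  foldr (fun js acc => xm X js.1 js.2 *m acc) z W.
Definition wsum (W : seq ('I_n * int)) (i : 'I_n) : int := \sum_(t <- W) A i t.1.

Lemma wsum_count (W : seq ('I_n * int)) i :
  \sum_j (A i j)%:~R * (count (fun t => t.1 == j) W)%:R = (wsum W i)%:~R :> rat.
Proof.
elim: W => [|t W IH]; first by rewrite /wsum big_nil big1 // => j _; rewrite mulr0.
rewrite /wsum big_cons intrD -/(wsum W i) -IH.
rewrite (eq_bigr (fun j => (A i j)%:~R * (t.1 == j)%:R + (A i j)%:~R * (count (fun t => t.1 == j) W)%:R)); last first.
  by move=> j _ /=; rewrite natrD mulrDr.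
rewrite big_split /=; congr (_ + _).
rewrite (bigD1 t.1) //= eqxx mulr1 big1 ?addr0 //.
by move=> j /negbTE Hj; rewrite eq_sym Hj mulr0.
Qed.

Lemma wsum_ne (W : seq ('I_n * int)) (mu : 'I_n -> int) :
  W != [::] -> exists i, qi i ^ (mu i - wsum W i) != qi i ^ mu i.
Proof.
move=> HW; apply/not_all_not_ex => Hall.
have H0 : forall i, wsum W i = 0.
  move=> i; have := Hall i; move/negP/negPn/eqP.
  rewrite expfzDr ?qi_neq0 // -{2}[qi i ^ mu i]mulr1 => /mulfI.
  move=> /(_ (expfz_neq0 _ (qi_neq0 i))) H.
  by have := qpow_eq1 H => /eqP; rewrite oppr_eq0 => /eqP.
set x : 'I_n -> rat := fun j => (count (fun t => t.1 == j) W)%:R.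
have [_ [_ [_ [_ [_ [Hpos _]]]]]] := HA.
have := Hpos x; clear Hall; case: W HW H0 @x => // t W _ H0 x.
have Hx : x t.1 != 0 by rewrite /x /= eqxx pnatr_eq0.
move=> /(_ (ex_intro (fun i => x i != 0) _ Hx)); rewrite big1 ?ltxx // => i _.
rewrite (eq_bigr (fun j => (x i * (d i)%:R) * ((A i j)%:~R * x j))); last first.
  by move=> j _; rewrite intrM mulrA mulrA -[((d i)%:Z)%:~R]/((d i)%:R).
by rewrite -mulr_sumr wsum_count H0 mulr0.
Qed.


Section Rep.
Variables (m : nat) (X : qlmod n m).
Hypothesis HX : is_qlrep A d q X.

Lemma rep_unit i : kk X i \in unitmx.
Proof. by case: HX. Qed.
Lemma rep_kcomm i j : kk X i *m kk X j = kk X j *m kk X i.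
Proof. by case: HX => _ [H _]. Qed.
Lemma rep_kh i j r : r != 0 -> kk X i *m hh X j r = hh X j r *m kk X i.
Proof. by case: HX => _ [_ [H _]]; apply: H. Qed.
Lemma rep_kxm i j r : kk X i *m xm X j r = qi i ^ (- A i j) *: (xm X j r *m kk X i).
Proof.
case: HX => _ [_ [_ [_ [_ [H _]]]]].
by rewrite scalemxAl -H -!mulmxA mulVmx ?rep_unit // mulmx1.
Qed.
Lemma rep_kxp i j r : kk X i *m xp X j r = qi i ^ (A i j) *: (xp X j r *m kk X i).
Proof.
case: HX => _ [_ [_ [_ [H _]]]].
by rewrite scalemxAl -H -!mulmxA mulVmx ?rep_unit // mulmx1.
Qed.
Lemma rep_hxm i j r s : r != 0 -> hh X i r *m xm X j s =
  xm X j s *m hh X i r - ((r%:~R)^-1 * qint d q i (r * A i j)) *: xm X j (r + s).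
Proof.
case: HX => _ [_ [_ [_ [_ [_ [_ [H _]]]]]]] Hr.
by rewrite -(H i j r s Hr) addrC subrK.
Qed.
Lemma rep_xpxm i j r s : xp X i r *m xm X j s = xm X j s *m xp X i r +
  (if i == j then (qi i - (qi i)^-1)^-1 *: (psip d q X i (r + s) - psim d q X i (r + s)) else 0).
Proof.
case: HX => _ [_ [_ [_ [_ [_ [_ [_ [_ [_ [H _]]]]]]]]]].
by rewrite -H addrC subrK.
Qed.

Lemma wsp_kinv mu z i : in_wspace d q X mu z -> invmx (kk X i) *m z = qi i ^ (- mu i) *: z.
Proof.
move=> Hz.
have E : z = qi i ^ mu i *: (invmx (kk X i) *m z).
  by rewrite scalemxAr -Hz mulmxA mulVmx ?rep_unit // mul1mx.
rewrite {2}E scalerA -expfzDr ?qi_neq0 // addNr expr0z scale1r //.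
Qed.

Lemma act_w mu z W : in_wspace d q X mu z ->
  in_wspace d q X (fun i => mu i - wsum W i) (act X W z).
Proof.
move=> Hz; elim: W => [|[j s] W IH] i /=.
  by rewrite /wsum big_nil subr0; apply: Hz.
rewrite mulmxA rep_kxm -scalemxAl -mulmxA IH scalemxAr scalerA -expfzDr ?qi_neq0 //.

by rewrite -scalemxAr /wsum big_cons /= opprD addrCA.
Qed.

End Rep.

Definition lsum m (X : qlmod n m) (w : 'cV[C]_m) (l : seq (C * seq ('I_n * int))) : 'cV[C]_m :=
  \sum_(t <- l) t.1 *: act X t.2 w.

Section Span.
Variables (m : nat) (X : qlmod n m).
Hypothesis HX : is_qlrep A d q X.
Variables (mu : 'I_n -> int) (w : 'cV[C]_m).
Hypothesis Hwt : in_wspace d q X mu w.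
Hypothesis Hlw : forall i s, s != 0 -> exists c : C, hh X i s *m w = c *: w.
Hypothesis Hxp : forall i r, xp X i r *m w = 0.

Definition Lsp (z : 'cV[C]_m) := exists l, z = lsum X w l.

Lemma Lsp0 : Lsp 0.
Proof. by exists [::]; rewrite /lsum big_nil. Qed.
Lemma LspD z1 z2 : Lsp z1 -> Lsp z2 -> Lsp (z1 + z2).
Proof. by move=> [l1 ->] [l2 ->]; exists (l1 ++ l2); rewrite /lsum big_cat. Qed.
Lemma LspZ c z : Lsp z -> Lsp (c *: z).
Proof.
move=> [l ->]; exists [seq (c * t.1, t.2) | t <- l].
by rewrite /lsum big_map scaler_sumr; apply: eq_bigr => t _; rewrite scalerA.
Qed.
Lemma LspB z1 z2 : Lsp z1 -> Lsp z2 -> Lsp (z1 - z2).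
Proof. by move=> H1 H2; apply: LspD => //; rewrite -scaleN1r; apply: LspZ. Qed.
Lemma Lsp_act W : Lsp (act X W w).
Proof. by exists [:: (1, W)]; rewrite /lsum big_cons big_nil scale1r addr0. Qed.
Lemma Lsp_w : Lsp w.
Proof. exact: (Lsp_act [::]). Qed.

Definition pres (P : 'M[C]_m) := forall W, Lsp (P *m act X W w).

Lemma pres_L P z : pres P -> Lsp z -> Lsp (P *m z).
Proof.
move=> HP [l ->]; rewrite /lsum; elim: l => [|t l IH].
  by rewrite big_nil mulmx0; apply: Lsp0.
by rewrite big_cons mulmxDr -scalemxAr; apply: LspD => //; apply: LspZ.
Qed.
Lemma pres_mul P Q : pres P -> pres Q -> pres (P *m Q).
Proof. by move=> HP HQ W; rewrite -mulmxA; apply: pres_L. Qed.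
Lemma pres_add P Q : pres P -> pres Q -> pres (P + Q).
Proof. by move=> HP HQ W; rewrite mulmxDl; apply: LspD. Qed.
Lemma pres_scale c P : pres P -> pres (c *: P).
Proof. by move=> HP W; rewrite -scalemxAl; apply: LspZ. Qed.
Lemma pres_0 : pres 0.
Proof. by move=> W; rewrite mul0mx; apply: Lsp0. Qed.
Lemma pres_1 : pres 1%:M.
Proof. by move=> W; rewrite mul1mx; apply: Lsp_act. Qed.
Lemma pres_sub P Q : pres P -> pres Q -> pres (P - Q).
Proof. by move=> HP HQ; apply: pres_add => //; rewrite -scaleN1r; apply: pres_scale. Qed.
Lemma pres_sum (I : Type) (r : seq I) (F : I -> 'M[C]_m) :
  (forall i, pres (F i)) -> pres (\sum_(i <- r) F i).
Proof. move=> H; apply: big_ind => //; [exact: pres_0 | exact: pres_add]. Qed.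

Lemma pres_xm j s : pres (xm X j s).
Proof. by move=> W; apply: (Lsp_act ((j, s) :: W)). Qed.
Lemma pres_kk i : pres (kk X i).
Proof. by move=> W; rewrite (act_w HX W Hwt); apply: LspZ; apply: Lsp_act. Qed.
Lemma pres_kinv i : pres (invmx (kk X i)).
Proof. by move=> W; rewrite (wsp_kinv HX _ (act_w HX W Hwt)); apply: LspZ; apply: Lsp_act. Qed.
Lemma pres_hh i r : r != 0 -> pres (hh X i r).
Proof.
move=> Hr; elim=> [|[j s] W IH] /=.
  by have [c ->] := Hlw i Hr; apply: LspZ; apply: Lsp_w.
rewrite mulmxA rep_hxm // mulmxBl -mulmxA; apply: LspB.
  by apply: pres_L => //; apply: pres_xm.
by rewrite -scalemxAl; apply: LspZ; apply: (Lsp_act ((j, r + s) :: W)).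
Qed.

Lemma pres_mexp (F : nat -> 'M[C]_m) r : (forall s, pres (F s.+1)) -> pres (mexp F r).
Proof.
move=> HF; rewrite /mexp /expcoef.
suff H : forall k, pres (nth 0 (expseq (@mulmx C m m m) 1%:M F r) k) by apply: H.
elim: r => [|r IH] k /=.
  by case: k => [|k] /=; [apply: pres_1 | case: k => *; apply: pres_0].
rewrite nth_rcons; case: ifP => _; first exact: IH.
case: ifP => _; last exact: pres_0.
apply: pres_scale; apply: pres_sum => s; apply: pres_scale; apply: pres_mul => //.
Qed.

Lemma pres_psip i z : pres (psip d q X i z).
Proof.
rewrite /psip; case: ifP => _; first exact: pres_0.
apply: pres_mul; first exact: pres_kk.
by apply: pres_mexp => s; apply: pres_scale; apply: pres_hh.
Qed.
Lemma pres_psim i z : pres (psim d q X i z).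
Proof.
rewrite /psim; case: ifP => _; first exact: pres_0.
apply: pres_mul; first exact: pres_kinv.
apply: pres_mexp => s; apply: pres_scale; apply: pres_hh.
by rewrite oppr_eq0.
Qed.

Lemma pres_xp i r : pres (xp X i r).
Proof.
move=> W; elim: W r => [|[j s] W IH] r /=.
  by rewrite Hxp; apply: Lsp0.
rewrite mulmxA rep_xpxm // mulmxDl; apply: LspD.
  by rewrite -mulmxA; apply: pres_L => //; apply: pres_xm.
case: ifP => _; last by rewrite mul0mx; apply: Lsp0.
rewrite -scalemxAl; apply: LspZ; apply: pres_sub; [exact: pres_psip | exact: pres_psim].
Qed.

Lemma Lsp_stable : stable_subspace X Lsp.
Proof.
split; [exact: Lsp0 | exact: LspD | exact: LspZ |].
move=> v Hv i r; split.
- by apply: pres_L => //; apply: pres_xp.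
- by apply: pres_L => //; apply: pres_xm.
- by move=> Hr; apply: pres_L => //; apply: pres_hh.
- by apply: pres_L => //; apply: pres_kk.
- by apply: pres_L => //; apply: pres_kinv.
Qed.

Lemma gen_Lsp z : in_generated X w z -> Lsp z.
Proof. by move=> H; apply: H; [exact: Lsp_stable | exact: Lsp_w]. Qed.

End Span.

Lemma wsp_sub m (X : qlmod n m) mu z1 z2 :
  in_wspace d q X mu z1 -> in_wspace d q X mu z2 -> in_wspace d q X mu (z1 - z2).
Proof. by move=> H1 H2 i; rewrite mulmxBr H1 H2 scalerBr. Qed.
Lemma wsp_scale m (X : qlmod n m) mu c z :
  in_wspace d q X mu z -> in_wspace d q X mu (c *: z).
Proof. by move=> H i; rewrite -scalemxAr H !scalerA mulrC. Qed.

Definition c0 (l : seq (C * seq ('I_n * int))) : C :=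
  \sum_(t <- l) (if t.2 == [::] then t.1 else 0).

Lemma In_filter (T : Type) (p : pred T) x s : List.In x (filter p s) -> p x /\ List.In x s.
Proof.
elim: s => [|y s IH] //=; case: ifP => Hy /=.
  by case=> [<-|/IH [? ?]]; [split; [|left]|split; [|right]].
by move/IH => [? ?]; split; [|right].
Qed.

Lemma lsum_wt m (X : qlmod n m) (HX : is_qlrep A d q X) mu w l :
  in_wspace d q X mu w -> in_wspace d q X mu (lsum X w l) -> lsum X w l = c0 l *: w.
Proof.
move=> Hw Hl; apply/eqP; rewrite -subr_eq0; apply/eqP.
have E : lsum X w l - c0 l *: w =
   \sum_(y <- [seq (t.1 *: act X t.2 w, fun i => mu i - wsum t.2 i) | t <- filter (fun t => t.2 != [::]) l]) y.1.
  rewrite big_map big_filter /lsum /c0 scaler_suml -sumrB [RHS]big_mkcond /=.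
  apply: eq_bigr => [[c W]] _ /=; case: W => [|j W] /=.
    by rewrite subrr.
  by rewrite scale0r subr0.
have Hz : in_wspace d q X mu (lsum X w l - c0 l *: w) by apply: wsp_sub => //; apply: wsp_scale.
refine (wsep (rep_kcomm HX) _ Hz E).
move=> y Hy; have [t [<- Ht2]] := proj1 (List.in_map_iff _ _ _) Hy.
have [Ht _] := In_filter Ht2; split => /=.
  by apply: wsp_scale; apply: act_w.
by apply: wsum_ne.
Qed.

Lemma act_hom m1 m2 (X1 : qlmod n m1) (X2 : qlmod n m2) (g : 'M[C]_(m2, m1)) W z :
  qlhom X1 X2 g -> g *m act X1 W z = act X2 W (g *m z).
Proof.
move=> Hg; elim: W => [|[j s] W IH] //=.
by rewrite mulmxA; have [_ <- _ _] := Hg j s; rewrite -mulmxA IH.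
Qed.

Lemma lsum_hom m1 m2 (X1 : qlmod n m1) (X2 : qlmod n m2) (g : 'M[C]_(m2, m1)) w l :
  qlhom X1 X2 g -> g *m lsum X1 w l = lsum X2 (g *m w) l.
Proof.
move=> Hg; rewrite /lsum mulmx_sumr; apply: eq_bigr => t _.
by rewrite -scalemxAr (act_hom _ _ Hg).
Qed.

Lemma hom_kinv m1 m2 (X1 : qlmod n m1) (X2 : qlmod n m2) (h : 'M[C]_(m2, m1)) i :
  is_qlrep A d q X1 -> is_qlrep A d q X2 -> qlhom X1 X2 h ->
  invmx (kk X2 i) *m h = h *m invmx (kk X1 i).
Proof.
move=> H1 H2 Hh; have [_ _ _ Hk] := Hh i 0.
rewrite -[LHS]mulmx1 -(mulmxV (rep_unit H1 i)) !mulmxA -[_ *m h *m _]mulmxA -Hk.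
by rewrite mulmxA mulVmx ?rep_unit // mul1mx.
Qed.

Lemma stable_pre m1 m2 (X1 : qlmod n m1) (X2 : qlmod n m2) (h : 'M[C]_(m2, m1)) S :
  is_qlrep A d q X1 -> is_qlrep A d q X2 -> qlhom X1 X2 h ->
  stable_subspace X2 S -> stable_subspace X1 (fun x => S (h *m x)).
Proof.
move=> H1 H2 Hh [S0 SD SZ So]; split.
- by rewrite mulmx0.
- by move=> v w Hv Hw; rewrite mulmxDr; apply: SD.
- by move=> c v Hv; rewrite -scalemxAr; apply: SZ.
move=> v Hv i r; have [Hp Hm Hhh Hk] := Hh i r; have [S1 S2 S3 S4 S5] := So _ Hv i r.
split.
- by rewrite mulmxA -Hp -mulmxA.
- by rewrite mulmxA -Hm -mulmxA.
- by move=> Hr; rewrite mulmxA -(Hhh Hr) -mulmxA; apply: S3.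
- by rewrite mulmxA -Hk -mulmxA.
- by rewrite mulmxA -(hom_kinv i H1 H2 Hh) -mulmxA.
Qed.

Lemma stable_img m1 m2 (X1 : qlmod n m1) (X2 : qlmod n m2) (h : 'M[C]_(m2, m1)) S :
  is_qlrep A d q X1 -> is_qlrep A d q X2 -> qlhom X1 X2 h ->
  stable_subspace X1 S -> stable_subspace X2 (fun y => exists x, S x /\ y = h *m x).
Proof.
move=> H1 H2 Hh [S0 SD SZ So]; split.
- by exists 0; rewrite mulmx0.
- by move=> _ _ [v [Hv ->]] [w [Hw ->]]; exists (v + w); rewrite mulmxDr; split => //; apply: SD.
- by move=> c _ [v [Hv ->]]; exists (c *: v); rewrite -scalemxAr; split => //; apply: SZ.
move=> _ [v [Hv ->]] i r; have [Hp Hm Hhh Hk] := Hh i r; have [S1 S2 S3 S4 S5] := So _ Hv i r.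
split.
- by exists (xp X1 i r *m v); rewrite mulmxA Hp -mulmxA.
- by exists (xm X1 i r *m v); rewrite mulmxA Hm -mulmxA.
- by move=> Hr; exists (hh X1 i r *m v); rewrite mulmxA (Hhh Hr) -mulmxA; split => //; apply: S3.
- by exists (kk X1 i *m v); rewrite mulmxA Hk -mulmxA.
- by exists (invmx (kk X1 i) *m v); rewrite mulmxA (hom_kinv i H1 H2 Hh) -mulmxA.
Qed.

Lemma gen_stable m (X : qlmod n m) w : stable_subspace X (in_generated X w).
Proof.
split.
- by move=> S [S0 _ _ _] _.
- by move=> v1 v2 H1 H2 S HS Sw; case: (HS) => _ SD _ _; apply: SD; [apply: H1|apply: H2].
- by move=> c v H S HS Sw; case: (HS) => _ _ SZ _; apply: SZ; apply: H.
move=> v Hv i r; split.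
- by move=> S HS Sw; case: (HS) => _ _ _ So; have [] := So _ (Hv S HS Sw) i r.
- by move=> S HS Sw; case: (HS) => _ _ _ So; have [] := So _ (Hv S HS Sw) i r.
- by move=> Hr S HS Sw; case: (HS) => _ _ _ So; have [_ _ H _ _] := So _ (Hv S HS Sw) i r; apply: H.
- by move=> S HS Sw; case: (HS) => _ _ _ So; have [] := So _ (Hv S HS Sw) i r.
- by move=> S HS Sw; case: (HS) => _ _ _ So; have [] := So _ (Hv S HS Sw) i r.
Qed.

Lemma gen_self m (X : qlmod n m) w : in_generated X w w.
Proof. by []. Qed.

Lemma mx_ext m1 m2 (P Q : 'M[C]_(m1, m2)) : (forall x : 'cV_m2, P *m x = Q *m x) -> P = Q.
Proof.
move=> H; apply/matrixP => i k.
have := congr1 (fun M : 'cV_m1 => M i 0) (H (delta_mx k 0)).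
by rewrite -!colE !mxE.
Qed.

Lemma wsp_hom m1 m2 (X1 : qlmod n m1) (X2 : qlmod n m2) (h : 'M[C]_(m2, m1)) mu x :
  qlhom X1 X2 h -> in_wspace d q X1 mu x -> in_wspace d q X2 mu (h *m x).
Proof.
move=> Hh Hx i; have [_ _ _ Hk] := Hh i 0.
by rewrite mulmxA Hk -mulmxA Hx scalemxAr.
Qed.

Lemma wsp_inj m1 m2 (X1 : qlmod n m1) (X2 : qlmod n m2) (h : 'M[C]_(m2, m1)) mu x :
  qlhom X1 X2 h -> lin_injective h -> in_wspace d q X2 mu (h *m x) -> in_wspace d q X1 mu x.
Proof.
move=> Hh Hi Hx i; have [_ _ _ Hk] := Hh i 0.
apply/eqP; rewrite -subr_eq0; apply/eqP; apply: Hi.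
by rewrite mulmxBr mulmxA -Hk -mulmxA Hx -scalemxAr subrr.
Qed.

Section Thm.
Variables (p : nat) (M : qlmod n p) (m : nat) (V : qlmod n m).
Variables (f : 'M[C]_(m, p)) (g : 'M[C]_(p, m)) (mu : 'I_n -> int) (v0 : 'cV[C]_p).
Variable (hv : 'I_n -> int -> C).
Hypothesis HMr : is_qlrep A d q M.
Hypothesis HMs : simple_mod M.
Hypothesis Hv0w : in_wspace d q M mu v0.
Hypothesis Hv0 : hlw_vector d q M v0.
Hypothesis Hv0h : forall i s, s != 0 -> hh M i s *m v0 = hv i s *: v0.
Hypothesis HVr : is_qlrep A d q V.
Hypothesis Hf : qlhom M V f.
Hypothesis Hg : qlhom V M g.
Hypothesis Hfi : lin_injective f.
Hypothesis Hgs : lin_surjective g.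
Hypothesis Hgf : g *m f = 0.
Hypothesis Hex : forall v : 'cV[C]_m, g *m v = 0 -> exists x, v = f *m x.

Lemma v0_neq0 : v0 != 0.
Proof. by case: Hv0 => [[]]. Qed.
Lemma v0_xp i r : xp M i r *m v0 = 0.
Proof. by case: Hv0. Qed.
Lemma v0_lw i s : s != 0 -> exists c : C, hh M i s *m v0 = c *: v0.
Proof. by move=> Hs; exists (hv i s); apply: Hv0h. Qed.

Lemma gen_v0 x : x != 0 -> in_generated M x v0.
Proof. by move=> Hx; case: HMs => _ H; apply: H. Qed.
Lemma gen_all x : in_generated M v0 x.
Proof. by case: HMs => _ H; apply: H; apply: v0_neq0. Qed.

Lemma Mwt x : in_wspace d q M mu x -> exists c, x = c *: v0.
Proof.
move=> Hx; have [l El] := gen_Lsp HMr Hv0w v0_lw v0_xp (gen_all x).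
by exists (c0 l); rewrite El; apply: (lsum_wt HMr Hv0w); rewrite -El.
Qed.

Lemma gf (x : 'cV[C]_p) : g *m (f *m x) = 0.
Proof. by rewrite mulmxA Hgf mul0mx. Qed.

Lemma fv0_hlw : hlw_vector d q V (f *m v0).
Proof.
split.
- split.
    by apply/eqP => /Hfi /eqP; apply/negP; apply: v0_neq0.
  move=> i s Hs; exists (hv i s); have [_ _ Hh _] := Hf i s.
  by rewrite mulmxA (Hh Hs) -mulmxA Hv0h // scalemxAr.
- by exists mu; apply: (wsp_hom Hf).
- by move=> i r; have [Hp _ _ _] := Hf i r; rewrite mulmxA Hp -mulmxA v0_xp mulmx0.
Qed.

Lemma Vwt_ker z : in_wspace d q V mu z -> g *m z = 0 -> exists c, z = c *: (f *m v0).
Proof.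
move=> Hz /Hex [x Ex]; rewrite Ex in Hz.
have [c Ec] := Mwt (wsp_inj Hf Hfi Hz).
by exists c; rewrite Ex Ec scalemxAr.
Qed.

Lemma Vwt_g z : in_wspace d q V mu z -> exists a, g *m z = a *: v0.
Proof. by move=> Hz; apply: Mwt; apply: (wsp_hom Hg). Qed.

Lemma part2 v : v != 0 -> in_wspace d q V mu v -> ~ lweight_vector V v -> generated_by V v.
Proof.
move=> Hv0' Hvw Hnl.
have [a Ea] := Vwt_g Hvw.
have [i [s [Hs Hc]]] : exists i s, s != 0 /\ forall c : C, hh V i s *m v != c *: v.
  apply: NNPP => Hn; apply: Hnl; split => // i s Hs; apply: NNPP => Hn2; apply: Hn.
  exists i, s; split => // c; apply/eqP => E; apply: Hn2; by exists c.
set y := hh V i s *m v - hv i s *: v.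
have [_ _ Hhg _] := Hg i s.
have Hgy : g *m y = 0.
  rewrite /y mulmxBr mulmxA -(Hhg Hs) -mulmxA Ea -scalemxAr Hv0h //.
  by rewrite -scalemxAr Ea !scalerA mulrC subrr.
have Hyw : in_wspace d q V mu y.
  apply: wsp_sub; last by apply: wsp_scale.
  by move=> j; rewrite mulmxA (rep_kh HVr) // -mulmxA Hvw scalemxAr.
have [b Eb] := Vwt_ker Hyw Hgy.
have Hb : b != 0.
  apply/eqP => Eb0; have := Hc (hv i s); by rewrite -subr_eq0 -/y Eb Eb0 scale0r eqxx.
have Hgv : g *m v != 0.
  apply/eqP => Hgv0; have [c Ec] := Vwt_ker Hvw Hgv0; apply: Hnl; split => // j t Ht.
  have [_ _ Hh _] := Hf j t; exists (hv j t).
  by rewrite Ec -scalemxAr mulmxA (Hh Ht) -mulmxA Hv0h // -scalemxAr !scalerA mulrC.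
move=> z S HS Sv.
have [S0 SD SZ So] := HS.
have Sy : S y.
  apply: (SD); first by have [_ _ H _ _] := So _ Sv i s; apply: H.
  by rewrite -scaleN1r; apply: (SZ); apply: (SZ).
have Sfv0 : S (f *m v0).
  by have := SZ b^-1 _ Sy; rewrite Eb scalerA mulVf // scale1r.
have Sf : forall x, S (f *m x).
  move=> x; apply: (gen_all x (stable_pre HMr HVr Hf HS) Sfv0).
have [y' [Sy' Ey']] : exists y', S y' /\ g *m z = g *m y'.
  have := gen_all (g *m z) (stable_img HVr HMr Hg HS).
  case; first by apply: (gen_v0 Hgv (stable_img HVr HMr Hg HS)); exists v.
  by move=> y'' [H1 H2]; exists y''.
have [x Ex] : exists x, z - y' = f *m x by apply: Hex; rewrite mulmxBr Ey' subrr.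
rewrite (_ : z = y' + f *m x); last by rewrite -Ex addrC subrK.
by apply: (SD).
Qed.


Lemma blk_hom (OV : 'M[C]_m) (OM : 'M[C]_p) (s : 'M[C]_(m, p)) :
  OV *m f = f *m OM -> OV *m s = s *m OM ->
  OV *m row_mx f s = row_mx f s *m block_mx OM 0 0 OM.
Proof.
move=> H1 H2; rewrite mul_mx_row mul_row_block !mulmx0 addr0 add0r H1 H2 //.
Qed.

Lemma TRIV w : in_wspace d q V mu w ->
  (forall i s, s != 0 -> exists c : C, hh V i s *m w = c *: w) ->
  (forall i r, xp V i r *m w = 0) -> g *m w = v0 -> trivial_ext M V.
Proof.
move=> Hww Hwl Hwx Hgw.
pose N := in_generated V w.
have HN : stable_subspace V N := gen_stable V w.
have [N0 ND NZ No] := HN.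
have nNfv0 : ~ N (f *m v0).
  move=> H; have [l El] := gen_Lsp HVr Hww Hwl Hwx H.
  have Hl : in_wspace d q V mu (lsum V w l) by rewrite -El; apply: (wsp_hom Hf).
  have := gf v0; rewrite El (lsum_wt HVr Hww Hl) -scalemxAr Hgw => /eqP.
  rewrite scaler_eq0 (negbTE v0_neq0) orbF => /eqP c00.
  move: El; rewrite (lsum_wt HVr Hww Hl) c00 scale0r => /Hfi H0.
  by move: v0_neq0; rewrite H0 eqxx.
have NfT : forall y, N (f *m y) -> y = 0.
  move=> y Hy; case: (eqVneq y 0) => // Hy0; exfalso; apply: nNfv0.
  exact: (gen_v0 Hy0 (stable_pre HMr HVr Hf HN) Hy).
have Ninj : forall z, N z -> g *m z = 0 -> z = 0.
  by move=> z Hz /Hex [y Ey]; rewrite Ey in Hz *; rewrite (NfT _ Hz) mulmx0.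
have Nsurj : forall x, exists z, N z /\ g *m z = x.
  move=> x; have Hw : exists z, N z /\ v0 = g *m z.
    by exists w; split; [apply: gen_self | rewrite Hgw].
  have [z [Hz Ez]] := gen_all x (stable_img HVr HMr Hg HN) Hw.
  by exists z.
pose zf k := proj1_sig (constructive_indefinite_description _ (Nsurj (delta_mx k 0))).
have Hzf : forall k, N (zf k) /\ g *m zf k = delta_mx k 0.
  move=> k; exact: (proj2_sig (constructive_indefinite_description _ (Nsurj (delta_mx k 0)))).
pose s : 'M[C]_(m, p) := \matrix_(i, k) zf k i 0.
have sE : forall x : 'cV_p, s *m x = \sum_k x k 0 *: zf k.
  move=> x; apply/matrixP => i j; rewrite !mxE summxE; apply: eq_bigr => k _.
  by rewrite !mxE (ord1 j) mulrC.
have Ns : forall x : 'cV_p, N (s *m x).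
  move=> x; rewrite sE; apply: (big_ind N N0 ND) => k _.
  by apply: NZ; case: (Hzf k).
have gs : forall x : 'cV_p, g *m (s *m x) = x.
  move=> x; rewrite sE mulmx_sumr [RHS]matrix_sum_delta; apply: eq_bigr => k _.
  by rewrite big_ord1 -scalemxAr (proj2 (Hzf k)).
have shom : forall (OV : 'M[C]_m) (OM : 'M[C]_p), (forall z, N z -> N (OV *m z)) ->
    OM *m g = g *m OV -> OV *m s = s *m OM.
  move=> OV OM HO HC; apply: mx_ext => x; rewrite -!mulmxA.
  apply/eqP; rewrite -subr_eq0; apply/eqP; apply: Ninj.
    by apply: ND; [apply: HO | rewrite -scaleN1r; apply: NZ].
  by rewrite mulmxBr (mulmxA g OV) -HC -mulmxA !gs subrr.
exists (row_mx f s); split.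
- move=> i r; have [Fp Fm Fh Fk] := Hf i r; have [Gp Gm Gh Gk] := Hg i r.
  split => /=.
  + apply: blk_hom => //; apply: shom => // z Hz; by have [] := No z Hz i r.
  + apply: blk_hom => //; apply: shom => // z Hz; by have [] := No z Hz i r.
  + move=> Hr; apply: blk_hom; first exact: Fh.
    apply: shom; last exact: Gh.
    by move=> z Hz; have [_ _ H _ _] := No z Hz i r; apply: H.
  + apply: blk_hom => //; apply: shom => // z Hz; by have [] := No z Hz i r.
- move=> x; rewrite -(vsubmxK x) mul_row_col => H0.
  have Hd : dsubmx x = 0.
    by have := congr1 (mulmx g) H0; rewrite mulmxDr gf gs add0r mulmx0.
  rewrite Hd mulmx0 addr0 in H0.
  by rewrite Hd (Hfi H0) col_mx0.
- move=> y; have [x1 Ex1] : exists x1, y - s *m (g *m y) = f *m x1.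
    by apply: Hex; rewrite mulmxBr gs subrr.
  by exists (col_mx x1 (g *m y)); rewrite mul_row_col -Ex1 subrK.
Qed.


Lemma P1a : ~ trivial_ext M V ->
  exists v : 'cV[C]_m,
       [/\ in_wspace d q V mu v, hlw_vector d q V v &
           forall w : 'cV[C]_m, in_wspace d q V mu w -> hlw_vector d q V w ->
             exists c : C, w = c *: v].
Proof.
move=> Hnt; exists (f *m v0); split; [exact: (wsp_hom Hf) | exact: fv0_hlw |].
move=> w' Hw' [[Hw0 Hwl] _ Hwx].
have [a Ea] := Vwt_g Hw'.
case: (eqVneq a 0) => [a0|an0].
  by apply: Vwt_ker => //; rewrite Ea a0 scale0r.
exfalso; apply: Hnt; apply: (TRIV (w := a^-1 *: w')).
- exact: wsp_scale.
- move=> i s Hs; have [c Ec] := Hwl i s Hs; exists c.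
  by rewrite -scalemxAr Ec !scalerA mulrC.
- by move=> i r; rewrite -scalemxAr Hwx scaler0.
- by rewrite -scalemxAr Ea scalerA mulVf // scale1r.
Qed.

Lemma P1b : (exists v : 'cV[C]_m,
       [/\ in_wspace d q V mu v, hlw_vector d q V v &
           forall w : 'cV[C]_m, in_wspace d q V mu w -> hlw_vector d q V w ->
             exists c : C, w = c *: v]) -> ~ trivial_ext M V.
Proof.
move=> [v [Hvw Hvh Huniq]] [F [HF HFi HFs]].
pose e (al be : C) := F *m col_mx (al *: v0) (be *: v0).
have Fop : forall (OV : 'M[C]_m) (OM : 'M[C]_p) (a b : 'cV_p),
    OV *m F = F *m block_mx OM 0 0 OM -> OV *m (F *m col_mx a b) = F *m col_mx (OM *m a) (OM *m b).
  by move=> OV OM a b H; rewrite mulmxA H -mulmxA mul_block_col !mul0mx addr0 add0r.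
have e_ne0 : forall al be, (al != 0) || (be != 0) -> e al be != 0.
  move=> al be Hal; apply/eqP => /HFi /eqP; rewrite col_mx_eq0 !scaler_eq0 (negbTE v0_neq0) !orbF.
  by case/orP: Hal => /negbTE ->; rewrite ?andbF.
have e_hlw : forall al be, (al != 0) || (be != 0) -> in_wspace d q V mu (e al be) /\ hlw_vector d q V (e al be).
  move=> al be Hal.
  have Hwsp : in_wspace d q V mu (e al be).
    move=> i; have [_ _ _ Hk] := HF i 0; rewrite /e (Fop _ _ _ _ Hk) -!scalemxAr !Hv0w.
    by rewrite scalemxAr scale_col_mx !scalerA (mulrC al) (mulrC be).
  split=> //; split; last first.
  - move=> i r; have [Hp _ _ _] := HF i r.
    by rewrite /e (Fop _ _ _ _ Hp) -!scalemxAr !v0_xp !scaler0 col_mx0 mulmx0.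
  - by exists mu.
  - split; first exact: e_ne0.
    move=> i s Hs; exists (hv i s); have [_ _ Hh _] := HF i s.
    rewrite /e (Fop _ _ _ _ (Hh Hs)) -!scalemxAr !Hv0h //.
    by rewrite scalemxAr scale_col_mx !scalerA (mulrC al) (mulrC be).
have h10 : ((1 : C) != 0) || ((0 : C) != 0) by rewrite oner_neq0.
have h01 : ((0 : C) != 0) || ((1 : C) != 0) by rewrite oner_neq0 orbT.
have [H10w H10h] := e_hlw 1 0 h10.
have [c1 E1] := Huniq _ H10w H10h.
have c1n0 : c1 != 0.
  by apply/eqP => c10; move: (e_ne0 1 0 h10); rewrite E1 c10 scale0r eqxx.
have [H01w H01h] := e_hlw 0 1 h01.
have [c2 E2] := Huniq _ H01w H01h.
have hc : (c2 != 0) || (- c1 != 0) by rewrite oppr_eq0 c1n0 orbT.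
have := e_ne0 _ _ hc.
have -> : e c2 (- c1) = c2 *: e 1 0 - c1 *: e 0 1.
  rewrite /e !scalemxAr -mulmxBr !scale_col_mx !scalerA !mulr1 !mulr0 !scale0r.
  by rewrite opp_col_mx add_col_mx oppr0 addr0 add0r scaleNr.
by rewrite E1 E2 !scalerA mulrC subrr eqxx.
Qed.

End Thm.
End Main.

Theorem mainTheorem4 (n : nat) (A : 'M[int]_n) (d : 'I_n -> nat) (q : C)
    (pi : 'I_n -> {poly C}) (p : nat) (M : qlmod n p)
    (m : nat) (V : qlmod n m) (f : 'M[C]_(m, p)) (g : 'M[C]_(p, m)) :
  finite_cartan A d ->
  not_root_of_unity q ->
  drinfeld_poly pi ->
  is_Vpi A d q pi M ->
  self_extension A d q M V f g ->
  (~ trivial_ext M V <->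
     exists v : 'cV[C]_m,
       [/\ in_wspace d q V (wt pi) v, hlw_vector d q V v &
           forall w : 'cV[C]_m, in_wspace d q V (wt pi) w -> hlw_vector d q V w ->
             exists c : C, w = c *: v])
  /\ (~ trivial_ext M V ->
      forall v : 'cV[C]_m, v != 0 -> in_wspace d q V (wt pi) v ->
        ~ lweight_vector V v -> generated_by V v).
Proof.
move=> HA Hq _ HM HV.
case: HM => [[HMr _] HMs [v0 [hv [_ Hv0w Hv0 Hv0h]]]].
case: HV => [[HVr _] [Hf [Hg [Hfi [Hgs [Hgf Hex]]]]]].
split.
- split.
  + by eapply P1a; eauto.
  + exact: (P1b Hv0w Hv0 Hv0h).
- by move=> _ v Hv Hvw Hnl; apply: (part2 HA Hq HMr HMs Hv0w Hv0 Hv0h HVr Hf Hg Hfi Hex Hv Hvw Hnl).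
Qed.
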